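(* (Dual SDP upper bound for the $\ell_\infty$-FGL of multi-layer networks.) Let $d\ge2$, let $n_1,\dots,n_d\ge1$, let $W_i\in\mathbb{R}^{n_{i+1}\times n_i}$ for $i\in[d-1]$, let $u\in\mathbb{R}^{1\times n_d}$, and let $a\le b$ be real. Let $\zeta\in\mathbb{R}$ and $\Lambda_i\in\mathbb{R}^{n_i}_+$ for $i\in[d]$, and put $T_i=\mathrm{diag}(\Lambda_i)$. Let $M$ be the symmetric block matrix with block rows/columns indexed by $0,1,\dots,d$ of sizes $1,n_1,\dots,n_d$, whose nonzero blocks are: - $M_{00}=\sum_{k=1}^{n_1}(\Lambda_1)_k-\zeta$, $M_{0d}=u$, $M_{d0}=u^T$; - $M_{11}=-T_1-2ab\,W_1^TT_2W_1$; - $M_{ii}=-2T_i-2ab\,W_i^TT_{i+1}W_i$ for $2\le i\le d-1$; - $M_{dd}=-2T_d$; - $M_{i,i+1}=(a+b)W_i^TT_{i+1}$ and $M_{i+1,i}=(a+b)T_{i+1}W_i$ for $1\le i\le d-1$ (when $d=2$, the blocks $M_{0d}$ and $M_{d0}$ are added to the listed ones; all other blocks are zero). If $M\preceq0$, then $$\frac{\zeta}{2}\;\ge\;\max_{v_i\in[a,b]^{n_{i+1}},\ i\in[d-1]}\big\|W_1^T\mathrm{diag}(v_1)W_2^T\mathrm{diag}(v_2)\cdots W_{d-1}^T\mathrm{diag}(v_{d-1})u^T\big\|_1 .$$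
   Context: $\mathrm{diag}(v)$ is the diagonal matrix with diagonal $v$; $P\preceq0$ means $-P$ is positive semidefinite; $\mathbb{R}_+=[0,\infty)$. The right-hand side is the $\ell_\infty$ formal global Lipschitz constant of the network $x\mapsto u\,\sigma(W_{d-1}\cdots\sigma(W_1x))$ whose activation $\sigma$ has derivative in $[a,b]$ (for ReLU, $a=0,b=1$): the maximum $\ell_1$-norm of the formal gradient when every activation derivative is treated as an independent value in $[a,b]$. *)

(* Defs.v *)
From mathcomp Require Import all_boot all_order all_algebra.
Set Implicit Arguments. Unset Strict Implicit. Unset Printing Implicit Defensive.
Import Order.TTheory GRing.Theory Num.Theory.
Local Open Scope ring_scope.

Section FGL.
Variable R : realFieldType.

Definition mxget m n (A : 'M[R]_(m, n)) (r c : nat) : R :=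
  match (insub r : option 'I_m), (insub c : option 'I_n) with
  | Some i, Some j => A i j
  | _, _ => 0
  end.

Variables (d : nat) (n : nat -> nat)
  (W : forall i : nat, 'M[R]_(n i.+1, n i))   (* W i : n_{i+1} x n_i, used for 1 <= i <= d-1 *)
  (u : 'rV[R]_(n d)) (a b zeta : R)
  (Lam : forall i : nat, 'rV[R]_(n i)).       (* Lam i = Lambda_i, used for 1 <= i <= d *)

Definition T (i : nat) : 'M[R]_(n i) := diag_mx (Lam i).

Definition bsize (k : 'I_d.+1) : nat := if val k == 0%N then 1%N else n k.

Definition blk (i j r c : nat) : R :=
  if (i == 0%N) && (j == 0%N) then (\sum_(k < n 1) Lam 1 0 k) - zeta
  else if (i == 0%N) && (j == d) then mxget u r c
  else if (i == d) && (j == 0%N) then mxget u^T r c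
  else if i == j then
    (if i == 1%N then
       mxget (- T 1 - (2 * a * b) *: ((W 1)^T *m T 2 *m W 1)) r c
     else if i == d then mxget (- (2%:R *: T d)) r c
     else mxget (- (2%:R *: T i) - (2 * a * b) *: ((W i)^T *m T i.+1 *m W i)) r c)
  else if (j == i.+1) && (1 <= i)%N then
    mxget ((a + b) *: ((W i)^T *m T i.+1)) r c
  else if (i == j.+1) && (1 <= j)%N then
    mxget ((a + b) *: (T j.+1 *m W j)) r c
  else 0.

Definition Mblock (i j : 'I_d.+1) : 'M[R]_(bsize i, bsize j) :=
  \matrix_(r < bsize i, c < bsize j) blk i j r c.

Definition Mdual : 'M[R]_(\sum_i bsize i) := \mxblock_(i, j) Mblock i j.

End FGL.

Definition nsd (R : realFieldType) (N : nat) (P : 'M[R]_N) : Prop :=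
  forall x : 'cV[R]_N, ((x^T *m P *m x) 0 0) <= 0.

Fixpoint chain (R : realFieldType) (n : nat -> nat)
  (W : forall i : nat, 'M[R]_(n i.+1, n i))
  (v : forall i : nat, 'rV[R]_(n i.+1)) (k : nat) : 'M[R]_(n 1%N, n k.+1) :=
  match k return 'M[R]_(n 1%N, n k.+1) with
  | 0%N => 1%:M
  | k'.+1 => chain W v k' *m (W k'.+1)^T *m diag_mx (v k'.+1)
  end.

Definition l1norm (R : realFieldType) (m : nat) (x : 'cV[R]_m) : R :=
  \sum_(k < m) `|x k 0|.

(* Main.v *)
Require Import Defs.
From mathcomp Require Import all_boot all_order all_algebra zify ring lra.
Import Order.TTheory GRing.Theory Num.Theory.
Local Open Scope ring_scope.

Lemma mxget_ord (R : realFieldType) m n (A : 'M[R]_(m, n)) (r : 'I_m) (c : 'I_n) :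
  mxget A r c = A r c.
Proof. by rewrite /mxget !valK. Qed.

Lemma mxget_col (R : realFieldType) m (x : 'cV[R]_m) (r : 'I_m) :
  mxget x r 0 = x r 0.
Proof.
rewrite /mxget valK; case: insubP => [i _ ei|] /=; last by [].
by congr (x r _); apply: val_inj; rewrite ei.
Qed.

Lemma sum_delta (R : realFieldType) (m N h : nat) (F : R) :
  \sum_(m <= j < N) (if j == h then F else 0) = if (m <= h < N)%N then F else 0.
Proof.
case: (boolP (m <= h < N)%N) => hh; last first.
  rewrite big1_seq // => j; rewrite mem_index_iota => hj.
  by case: eqP => // ej; lia.
have hm : (m <= h)%N by lia.
have hN : (h <= N)%N by lia.
rewrite (@big_cat_nat _ _ _ h m N) // (@big_ltn _ _ _ h N); last by lia.
rewrite eqxx big1_seq; last first.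
  by move=> j; rewrite mem_index_iota => hj; case: eqP => // ej; lia.
rewrite big1_seq /=; first by rewrite add0r addr0.
by move=> j; rewrite mem_index_iota => hj; case: eqP => // ej; lia.
Qed.

Lemma sum_window (R : realFieldType) (m M N : nat) (G : nat -> R) :
  (m <= M)%N -> (M <= N)%N ->
  \sum_(0 <= i < N) (if (m <= i < M)%N then G i else 0) = \sum_(m <= i < M) G i.
Proof.
move=> hmM hMN.
rewrite (@big_cat_nat _ _ _ m 0 N) //; last exact: leq_trans hmM hMN.
rewrite (@big_cat_nat _ _ _ M m N) //.
rewrite big1_seq; last first.
  by move=> i; rewrite mem_index_iota => hi; case: ifP => // hh; lia.
rewrite /= add0r [X in _ + X]big1_seq /=; last first.
  by move=> i; rewrite mem_index_iota => hi; case: ifP => // hh; lia.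
rewrite addr0; apply: eq_big_seq => i; rewrite mem_index_iota => hi.
by case: ifP => // hh; lia.
Qed.

Lemma quad_entry (R : realFieldType) p q (x : 'cV[R]_p) (A : 'M[R]_(p, q)) (z : 'cV[R]_q) :
  (x^T *m A *m z) 0 0 = \sum_(r < p) \sum_(c < q) x r 0 * A r c * z c 0.
Proof.
rewrite mxE; under eq_bigr do rewrite mxE big_distrl.
rewrite exchange_big /=; apply: eq_bigr => r _; apply: eq_bigr => c _.
by rewrite !mxE.
Qed.

Lemma quad_nat (R : realFieldType) p q (x : 'cV[R]_p) (A : 'M[R]_(p, q)) (z : 'cV[R]_q) :
  \sum_(0 <= r < p) \sum_(0 <= c < q) mxget x r 0 * mxget A r c * mxget z c 0
  = (x^T *m A *m z) 0 0.
Proof.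
rewrite quad_entry big_mkord; apply: eq_bigr => r _; rewrite big_mkord.
apply: eq_bigr => c _; by rewrite !mxget_col mxget_ord.
Qed.

Lemma diag_quad (R : realFieldType) m (x w : 'cV[R]_m) (L : 'rV[R]_m) :
  (x^T *m diag_mx L *m w) 0 0 = \sum_(k < m) x k 0 * L 0 k * w k 0.
Proof.
rewrite quad_entry; apply: eq_bigr => r _.
rewrite (bigD1 r) //= big1 ?addr0; first by rewrite !mxE eqxx mulr1n.
by move=> c /negPf hc; rewrite !mxE eq_sym hc mulr0n mulr0 mul0r.
Qed.

Section Main.
Variables (R : realFieldType) (d' : nat) (n : nat -> nat)
  (W : forall i : nat, 'M[R]_(n i.+1, n i)) (u : 'rV[R]_(n d'.+2))
  (a b zeta : R) (Lam : forall i : nat, 'rV[R]_(n i))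
  (v : forall i : nat, 'rV[R]_(n i.+1)) (s : 'cV[R]_(n 1%N)).
Local Notation d := d'.+2.

Definition stp (k : nat) : 'cV[R]_(n k) -> 'cV[R]_(n k.+1) :=
  match k return 'cV[R]_(n k) -> 'cV[R]_(n k.+1) with
  | 0%N => fun _ => s
  | k1.+1 => fun x => diag_mx (v k1.+1) *m (W k1.+1 *m x)
  end.

Fixpoint yv (k : nat) : 'cV[R]_(n k) :=
  match k return 'cV[R]_(n k) with
  | 0%N => 0
  | k1.+1 => stp k1 (yv k1)
  end.

Definition f (i r : nat) : R := if i == 0%N then 1 else mxget (yv i) r 0.
Definition bs (i : nat) : nat := if i == 0%N then 1%N else n i.
Definition bk := @blk R d n W u a b zeta Lam.
Definition Bn (i j : nat) : R :=
  \sum_(0 <= r < bs i) \sum_(0 <= c < bs j) f i r * bk i j r c * f j c.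

Definition Xc (i : 'I_d.+1) : 'cV[R]_(bsize n i) := \col_(r < bsize n i) f i r.
Definition xc := \mxcol_i Xc i.

Lemma Q_eq : (xc^T *m Mdual W u a b zeta Lam *m xc) 0 0 =
  \sum_(0 <= i < d.+1) \sum_(0 <= j < d.+1) Bn i j.
Proof.
rewrite /xc /Mdual tr_mxcol mul_mxrow_mxblock mul_mxrow_mxcol summxE.
under eq_bigr do rewrite mulmx_suml summxE.
rewrite exchange_big big_mkord; apply: eq_bigr => i _.
rewrite big_mkord; apply: eq_bigr => j _.
rewrite quad_entry /Bn big_mkord; apply: eq_bigr => r _.
rewrite big_mkord; apply: eq_bigr => c _.
by rewrite !mxE.
Qed.

Lemma Bn0 i j : ~~ ((i == 0%N) && (j == 0%N)) -> ~~ ((i == 0%N) && (j == d)) ->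
  ~~ ((i == d) && (j == 0%N)) -> i != j -> ~~ ((j == i.+1) && (1 <= i)%N) ->
  ~~ ((i == j.+1) && (1 <= j)%N) -> Bn i j = 0.
Proof.
move=> h1 h2 h3 h4 h5 h6; rewrite /Bn big1 // => r _; rewrite big1 // => c _.
rewrite /bk /blk (negbTE h1) (negbTE h2) (negbTE h3) (negbTE h4) (negbTE h5) (negbTE h6).
by rewrite mulr0 mul0r.
Qed.

Ltac solve_if := repeat (case: ifP => ?); try (exfalso; lia); rewrite ?addr0 ?add0r //.

Lemma Bn_split i j : Bn i j =
    (if i == 0%N then (if j == 0%N then Bn 0 0 else 0) else 0)
  + (if i == 0%N then (if j == d then Bn 0 d else 0) else 0)
  + (if i == d then (if j == 0%N then Bn d 0 else 0) else 0)
  + (if (1 <= i)%N then (if j == i then Bn i i else 0) else 0)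
  + (if (1 <= i)%N then (if j == i.+1 then Bn i i.+1 else 0) else 0)
  + (if (2 <= i)%N then (if j == i.-1 then Bn i i.-1 else 0) else 0).
Proof.
case: (boolP ((i == 0%N) && (j == 0%N))) => [/andP[/eqP-> /eqP->]|h1]; first by solve_if.
case: (boolP ((i == 0%N) && (j == d))) => [/andP[/eqP-> /eqP->]|h2]; first by solve_if.
case: (boolP ((i == d) && (j == 0%N))) => [/andP[/eqP-> /eqP->]|h3]; first by solve_if.
case: (eqVneq i j) => [ej|h4]; first by subst j; solve_if.
case: (boolP ((j == i.+1) && (1 <= i)%N)) => [/andP[/eqP ej h]|h5]; first by subst j; solve_if.
case: (boolP ((i == j.+1) && (1 <= j)%N)) => [/andP[/eqP ei h]|h6]; first by subst i; solve_if.
rewrite (@Bn0 i j h1 h2 h3 h4 h5 h6); solve_if.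
Qed.

Lemma sum_if_delta (m N h : nat) (c : bool) (X : R) :
  \sum_(m <= j < N) (if c then (if j == h then X else 0) else 0)
  = if c && (m <= h < N)%N then X else 0.
Proof. case: c => /=; first exact: sum_delta. by rewrite big1. Qed.

Lemma sum_cond (N : nat) (P Q : nat -> bool) (G : nat -> R) :
  (forall i, (i < N)%N -> P i = Q i) ->
  \sum_(0 <= i < N) (if P i then G i else 0) = \sum_(0 <= i < N) (if Q i then G i else 0).
Proof.
move=> h; apply: eq_big_seq => i; rewrite mem_index_iota => hi.
by rewrite h //; lia.
Qed.

Lemma Q_split : \sum_(0 <= i < d.+1) \sum_(0 <= j < d.+1) Bn i j =
  Bn 0 0 + Bn 0 d + Bn d 0 + \sum_(1 <= i < d.+1) Bn i i
  + \sum_(1 <= i < d) Bn i i.+1 + \sum_(2 <= i < d.+1) Bn i i.-1.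
Proof.
under eq_bigr => i _ do rewrite (eq_bigr _ (fun j _ => Bn_split i j)) !big_split /= !sum_if_delta.
rewrite (eq_big_nat _ _ (F2 := fun i =>
  (if i == 0%N then Bn 0 0 else 0) + (if i == 0%N then Bn 0 d else 0)
  + (if i == d then Bn d 0 else 0) + (if (1 <= i < d.+1)%N then Bn i i else 0)
  + (if (1 <= i < d)%N then Bn i i.+1 else 0)
  + (if (2 <= i < d.+1)%N then Bn i i.-1 else 0))); last first.
  move=> i hi.
  have -> : [&& i == 0%N, (0 <= 0)%N & (0 < d'.+3)%N] = (i == 0%N) by lia.
  have -> : [&& i == 0%N, (0 <= d)%N & (d < d'.+3)%N] = (i == 0%N) by lia.
  have -> : [&& i == d, (0 <= 0)%N & (0 < d'.+3)%N] = (i == d) by lia.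
  have -> : [&& (0 < i)%N, (0 <= i)%N & (i < d'.+3)%N] = (1 <= i < d.+1)%N by lia.
  have -> : [&& (0 < i)%N, (0 <= i.+1)%N & (i.+1 < d'.+3)%N] = (1 <= i < d)%N by lia.
  have -> : [&& (1 < i)%N, (0 <= i.-1)%N & (i.-1 < d'.+3)%N] = (2 <= i < d.+1)%N by lia.
  by [].
rewrite !big_split /= !sum_delta !sum_window //.
by have -> : (0 <= d < d'.+3)%N = true by lia.
Qed.

Definition qf p q (x : 'cV[R]_p) (A : 'M[R]_(p, q)) (z : 'cV[R]_q) := (x^T *m A *m z) 0 0.
Arguments qf {p q}.
Lemma qfB p q (x : 'cV[R]_p) (A B : 'M[R]_(p, q)) (z : 'cV[R]_q) : qf x (A - B) z = qf x A z - qf x B z.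
Proof. by rewrite /qf mulmxBr mulmxBl !mxE. Qed.
Lemma qfN p q (x : 'cV[R]_p) (A : 'M[R]_(p, q)) (z : 'cV[R]_q) : qf x (- A) z = - qf x A z.
Proof. by rewrite /qf mulmxN mulNmx !mxE. Qed.
Lemma qfZ p q (x : 'cV[R]_p) (c : R) (A : 'M[R]_(p, q)) (z : 'cV[R]_q) : qf x (c *: A) z = c * qf x A z.
Proof. by rewrite /qf -scalemxAr -scalemxAl mxE. Qed.

Lemma BnM i j (A : 'M[R]_(n i, n j)) : (1 <= i)%N -> (1 <= j)%N ->
  (forall r c, bk i j r c = mxget A r c) -> Bn i j = qf (yv i) A (yv j).
Proof.
move=> hi hj hA; rewrite /Bn /bs /f.
have -> : (i == 0%N) = false by lia.
have -> : (j == 0%N) = false by lia.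
rewrite /qf -quad_nat; apply: eq_big_nat => r _; apply: eq_big_nat => c _.
by rewrite hA.
Qed.

Definition zv i := W i *m yv i.
Definition Aq i := \sum_(k < n i) yv i k 0 * Lam i 0 k * yv i k 0.
Definition Zq i := \sum_(k < n i.+1) zv i k 0 * Lam i.+1 0 k * zv i k 0.
Definition Cq i := \sum_(k < n i.+1) zv i k 0 * Lam i.+1 0 k * yv i.+1 k 0.

Lemma qT i : qf (yv i) (T Lam i) (yv i) = Aq i.
Proof. by rewrite /qf /T diag_quad. Qed.

Lemma qWTW i : qf (yv i) ((W i)^T *m T Lam i.+1 *m W i) (yv i) = Zq i.
Proof.
rewrite /qf.
have -> : (yv i)^T *m ((W i)^T *m T Lam i.+1 *m W i) *m yv i
  = (zv i)^T *m T Lam i.+1 *m zv i by rewrite /zv trmx_mul !mulmxA.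
by rewrite /T diag_quad.
Qed.

Lemma qWT i : qf (yv i) ((W i)^T *m T Lam i.+1) (yv i.+1) = Cq i.
Proof.
rewrite /qf.
have -> : (yv i)^T *m ((W i)^T *m T Lam i.+1) *m yv i.+1
  = (zv i)^T *m T Lam i.+1 *m yv i.+1 by rewrite /zv trmx_mul !mulmxA.
by rewrite /T diag_quad.
Qed.

Lemma qTW j : qf (yv j.+1) (T Lam j.+1 *m W j) (yv j) = Cq j.
Proof.
rewrite /qf.
have -> : (yv j.+1)^T *m (T Lam j.+1 *m W j) *m yv j
  = (yv j.+1)^T *m T Lam j.+1 *m zv j by rewrite /zv !mulmxA.
rewrite /T diag_quad /Cq; apply: eq_bigr => k _; ring.
Qed.

Lemma Bn11 : Bn 1 1 = - Aq 1 - (2 * a * b) * Zq 1.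
Proof.
rewrite (@BnM 1 1 (- T Lam 1 - (2 * a * b) *: ((W 1)^T *m T Lam 2 *m W 1))) //.
  by rewrite qfB qfN qfZ qT qWTW.
Qed.

Lemma Bndd : Bn d d = - (2%:R * Aq d).
Proof.
rewrite (@BnM d d (- (2%:R *: T Lam d))) //.
  by rewrite qfN qfZ qT.
by move=> r c; rewrite /bk /blk /= !eqxx.
Qed.

Lemma Bnii i : (2 <= i < d)%N -> Bn i i = - (2%:R * Aq i) - (2 * a * b) * Zq i.
Proof.
move=> hi.
rewrite (@BnM i i (- (2%:R *: T Lam i) - (2 * a * b) *: ((W i)^T *m T Lam i.+1 *m W i))) //; last first.
- move=> r c; rewrite /bk /blk eqxx.
  have -> : (i == 0%N) = false by lia.
  have -> : (i == 1%N) = false by lia.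
  have -> : (i == d) = false by lia.
  by [].
- by lia.
- by lia.
by rewrite qfB qfN !qfZ qT qWTW.
Qed.

Lemma BnO i : (1 <= i < d)%N -> Bn i i.+1 = (a + b) * Cq i.
Proof.
move=> hi.
rewrite (@BnM i i.+1 ((a + b) *: ((W i)^T *m T Lam i.+1))); first (by rewrite qfZ qWT); try lia.
move=> r c; rewrite /bk /blk eqxx.
have -> : (i == 0%N) = false by lia.
have -> : (i == i.+1) = false by lia.
have -> : (1 <= i)%N = true by lia.
by rewrite /= ?andbF.
Qed.

Lemma BnO' i : (1 <= i < d)%N -> Bn i.+1 i = (a + b) * Cq i.
Proof.
move=> hi.
rewrite (@BnM i.+1 i ((a + b) *: (T Lam i.+1 *m W i))); first (by rewrite qfZ qTW); try lia.
move=> r c; rewrite /bk /blk eqxx.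
have -> : (i.+1 == 0%N) = false by lia.
have -> : (i.+1 == i) = false by lia.
have -> : (i == i.+2) = false by lia.
have -> : (i.+1 == d) && (i == 0%N) = false by lia.
have -> : (1 <= i)%N = true by lia.
by [].
Qed.

Lemma mxget_row0 m (x : 'rV[R]_m) (c : 'I_m) : mxget x 0 c = x 0 c.
Proof.
rewrite /mxget valK; case: insubP => [i _ ei|] /=; last by [].
by congr (x _ c); apply: val_inj; rewrite ei.
Qed.

Definition uy := (u *m yv d) 0 0.

Lemma Bn00 : Bn 0 0 = \sum_(k < n 1) Lam 1 0 k - zeta.
Proof. by rewrite /Bn /bs /= !big_nat1 /f /bk /blk /= mul1r mulr1. Qed.

Lemma Bn0d : Bn 0 d = uy.
Proof.
rewrite /Bn /bs /= big_nat1 /uy mxE big_mkord; apply: eq_bigr => c _.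
by rewrite /f /bk /blk /= eqxx mul1r mxget_row0 mxget_col.
Qed.

Lemma Bnd0 : Bn d 0 = uy.
Proof.
rewrite /Bn /bs /= /uy mxE big_mkord; apply: eq_bigr => r _.
rewrite big_nat1 /f /bk /blk /= eqxx mulr1 mxget_col.
have -> : mxget u^T r 0 = u^T r 0 by exact: mxget_col.
by rewrite [u^T r 0]mxE mulrC.
Qed.

Lemma yv_chain k : yv k.+1 = (chain W v k)^T *m s.
Proof.
elim: k => [|k IH]; first by rewrite /= trmx1 mul1mx.
by rewrite [LHS]/= -/(yv k.+1) IH /= !trmx_mul tr_diag_mx trmxK !mulmxA.
Qed.

Definition G i := - (2%:R * Aq i.+1) + 2 * ((a + b) * Cq i) - (2 * a * b) * Zq i.

Lemma Q_total : (xc^T *m Mdual W u a b zeta Lam *m xc) 0 0 =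
  - zeta + 2 * uy + (\sum_(k < n 1) Lam 1 0 k - Aq 1) + \sum_(1 <= i < d) G i.
Proof.
rewrite Q_eq Q_split Bn00 Bn0d Bnd0.
rewrite (@big_ltn _ _ _ 1 d.+1) // Bn11 (@big_nat_recr _ _ _ d 2) // Bndd.
under eq_big_nat => i hi do rewrite (Bnii i hi).
have eO : \sum_(1 <= i < d) Bn i i.+1 = \sum_(1 <= i < d) (a + b) * Cq i.
  by apply: eq_big_nat => i hi; exact: BnO.
have eO' : \sum_(2 <= i < d'.+3) Bn i i.-1 = \sum_(1 <= i < d) (a + b) * Cq i.
  by rewrite big_add1; apply: eq_big_nat => i hi; exact: BnO'.
rewrite eO eO'.
have eA : \sum_(1 <= i < d) Aq i.+1 = \sum_(2 <= i < d) Aq i + Aq d.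
  by rewrite -big_nat_recr // big_add1.
have eZ : \sum_(1 <= i < d) Zq i = Zq 1 + \sum_(2 <= i < d) Zq i by rewrite big_ltn.
rewrite /G !big_split /= !sumrN -!mulr_sumr eA eZ.
ring.
Qed.

Lemma yv_succ i : (1 <= i)%N -> forall k, yv i.+1 k 0 = v i 0 k * zv i k 0.
Proof.
case: i => [//|i] _ k.
by rewrite [yv _]/= -/(yv i.+1) mul_diag_mx mxE.
Qed.

Lemma G_ge0 i : (1 <= i < d)%N -> (forall k, 0 <= Lam i.+1 0 k) ->
  (forall k, a <= v i 0 k <= b) -> 0 <= G i.
Proof.
move=> hi hL hv.
have -> : G i = \sum_(k < n i.+1)
    (2 * (Lam i.+1 0 k * zv i k 0 ^+ 2)) * ((v i 0 k - a) * (b - v i 0 k)).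
  rewrite /G /Aq /Cq /Zq !mulr_sumr -!sumrN -!big_split /=.
  apply: eq_bigr => k _; rewrite !yv_succ; last by lia.
  ring.
apply: sumr_ge0 => k _.
have /andP[h1 h2] := hv k.
apply: mulr_ge0; first by apply: mulr_ge0; [lra | apply: mulr_ge0; [exact: hL | exact: sqr_ge0]].
by apply: mulr_ge0; lra.
Qed.

Lemma Aq1 : (forall k, s k 0 ^+ 2 = 1) -> Aq 1 = \sum_(k < n 1) Lam 1 0 k.
Proof.
move=> hs; rewrite /Aq; apply: eq_bigr => k _.
by rewrite [yv 1]/= mulrC mulrA -expr2 hs mul1r.
Qed.

Lemma uy_eq : uy = \sum_(k < n 1) (chain W v d'.+1 *m u^T) k 0 * s k 0.
Proof.
rewrite /uy yv_chain mulmxA mxE; apply: eq_bigr => k _.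
congr (_ * _); rewrite !mxE; apply: eq_bigr => j _; by rewrite !mxE mulrC.
Qed.
End Main.

Theorem mainTheorem10 (R : realFieldType) (d' : nat) (n : nat -> nat)
  (hn : forall i : nat, (1 <= i <= d'.+2)%N -> (0 < n i)%N)
  (W : forall i : nat, 'M[R]_(n i.+1, n i)) (u : 'rV[R]_(n d'.+2))
  (a b : R) (hab : a <= b) (zeta : R) (Lam : forall i : nat, 'rV[R]_(n i))
  (hLam : forall i : nat, (1 <= i <= d'.+2)%N -> forall k, 0 <= Lam i 0 k)
  (hM : nsd (@Mdual R d'.+2 n W u a b zeta Lam)) :
  forall v : forall i : nat, 'rV[R]_(n i.+1),
    (forall i : nat, (1 <= i <= d'.+1)%N -> forall k, a <= v i 0 k <= b) ->
    l1norm (chain W v d'.+1 *m u^T) <= zeta / 2.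
Proof.
move=> v hv.
pose s : 'cV[R]_(n 1%N) := \col_k (if 0 <= (chain W v d'.+1 *m u^T) k 0 then 1 else -1).
have hs : forall k, s k 0 = if 0 <= (chain W v d'.+1 *m u^T) k 0 then 1 else -1.
  by move=> k; rewrite mxE.
have hQ := hM (xc R d' n W v s).
rewrite Q_total Aq1 in hQ; last first.
  by move=> k; rewrite hs; case: ifP => _; rewrite ?expr1n ?sqrrN ?expr1n.
have hG : 0 <= \sum_(1 <= i < d'.+2) G R n W a b Lam v s i.
  rewrite big_seq_cond; apply: sumr_ge0 => i /andP[hi _].
  rewrite mem_index_iota in hi.
  apply: (@G_ge0 R d') => //.
  - by apply: hLam; lia.
  - by apply: hv; lia.
have hu : uy R d' n W u v s = l1norm (chain W v d'.+1 *m u^T).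
  rewrite uy_eq /l1norm; apply: eq_bigr => k _.
  rewrite hs; case: ifP => h.
  - by rewrite mulr1 ger0_norm.
  - by rewrite mulrN1 ltr0_norm // ltNge h.
rewrite hu subrr addr0 in hQ.
lra.
Qed.
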